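(* Let $(S_n)_{n\in\mathbb{N}}$ be a simple random walk on $\mathbb{Z}$ with constant transition probability $p\equiv\overline{p}\in(0,1)$, $\overline{p}\neq\frac12$ (i.e. i.i.d. steps equal to $+1$ with probability $\overline{p}$ and $-1$ with probability $1-\overline{p}$). Then there exists a bounded function $f:\mathbb{Z}\to\mathbb{R}$ such that the sequence $\ell_n(f)=\frac1n\sum_{j=1}^n f(S_j)$, $n\in\mathbb{N}$, does not satisfy a large deviation principle.
   Context: A sequence of real random variables $(X_n)$ satisfies a large deviation principle if there is a lower semicontinuous $J:\mathbb{R}\to[0,\infty]$ with $-\inf_U J\le\liminf_n\frac1n\log\mathbb{P}(X_n\in U)$ for all open $U$ and $\limsup_n\frac1n\log\mathbb{P}(X_n\in F)\le-\inf_F J$ for all closed $F$. The walk starts at $S_1=0$. *)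

(* Defs.v *)
From HB Require Import structures.
From mathcomp Require Import all_boot all_order all_algebra.
From mathcomp Require Import all_classical all_reals all_analysis.
Set Implicit Arguments. Unset Strict Implicit. Unset Printing Implicit Defensive.
Import Order.TTheory GRing.Theory Num.Theory.
Import numFieldNormedType.Exports.
Local Open Scope classical_set_scope.
Local Open Scope ring_scope.

Definition stepZ (b : bool) : int := if b then 1 else -1.

(* walk_pos s j = S_(j+1) = X_1 + ... + X_j  (so S_1 = 0). *)
Definition walk_pos (n : nat) (s : {ffun 'I_n -> bool}) (j : nat) : int :=
  \sum_(i < n | (i < j)%N) stepZ (s i).

(* ell_n(f) = (1/n) sum_{j=1}^n f(S_j); only uses the first n-1 steps. *)
Definition ell (R : realType) (f : int -> R) (n : nat) (s : {ffun 'I_n -> bool}) : R :=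
  (n%:R)^-1 * \sum_(j < n) f (walk_pos s j).

Definition path_weight (R : realType) (p : R) (n : nat) (s : {ffun 'I_n -> bool}) : R :=
  \prod_(i < n) (if s i then p else 1 - p).

Definition ell_law (R : realType) (p : R) (f : int -> R) (n : nat) (A : set R) : R :=
  \sum_(s : {ffun 'I_n -> bool} | `[< A (ell f s) >]) path_weight p s.

Definition elog (R : realType) (x : R) : \bar R :=
  if x == 0 then -oo%E else (ln x)%:E.

Definition rate_seq (R : realType) (P : nat -> set R -> R) (A : set R) : nat -> \bar R :=
  fun n => (((n%:R : R)^-1)%:E * elog (P n A))%E.

Definition satisfies_LDP (R : realType) (P : nat -> set R -> R) : Prop :=
  exists J : R -> \bar R,
    (forall x, (0 <= J x)%E) /\ lower_semicontinuous J /\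
    (forall U : set R, open U ->
       (- ereal_inf (J @` U) <= limn_einf (rate_seq P U))%E) /\
    (forall F : set R, closed F ->
       (limn_esup (rate_seq P F) <= - ereal_inf (J @` F))%E).

(* Main.v *)
Require Import Defs.
From HB Require Import structures.
From mathcomp Require Import all_boot all_order all_algebra.
From mathcomp Require Import all_classical all_reals all_analysis.
From mathcomp Require Import zify ring lra.
Import Order.TTheory GRing.Theory Num.Theory.
Import numFieldNormedType.Exports.
Set Implicit Arguments. Unset Strict Implicit. Unset Printing Implicit Defensive.
Local Open Scope ring_scope.
Section Walk.
Variable R : realType.

Definition nd n (s : {ffun 'I_n -> bool}) (j : nat) : nat :=
  (\sum_(i < n | (i < j)%N) (~~ s i : nat))%N.

Lemma walk_posE n (s : {ffun 'I_n -> bool}) j : (j <= n)%N ->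
  walk_pos s j = j%:Z - 2 * (nd s j)%:Z.
Proof.
move=> jn; rewrite /walk_pos /nd.
have -> : \sum_(i < n | (i < j)%N) stepZ (s i) =
   \sum_(i < n | (i < j)%N) (1 - 2 * ((~~ s i : nat))%:Z).
  by apply: eq_bigr => i _; case: (s i).
rewrite sumrB -mulr_sumr (big_morph Posz PoszD (erefl _)).
congr (_ - _).
rewrite -(big_ord_widen n (fun=> (1:int)) jn) sumr_const card_ord.
by rewrite -natz.
Qed.

Lemma walk_pos_le n (s : {ffun 'I_n -> bool}) j : (j <= n)%N ->
  walk_pos s j <= j%:Z.
Proof. by move=> jn; rewrite walk_posE //; lia. Qed.

Definition pw (p : R) (b : bool) : R := if b then p else 1 - p.

Lemma sum_prod_ffun n (G : 'I_n -> bool -> R) :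
  \sum_(s : {ffun 'I_n -> bool}) \prod_(i < n) G i (s i) =
  \prod_(i < n) (G i true + G i false).
Proof.
rewrite -(bigA_distr_bigA (fun i b => G i b)).
by apply: eq_bigr => i _; rewrite big_bool.
Qed.

Lemma path_weight_ge0 (p : R) n (s : {ffun 'I_n -> bool}) :
  0 <= p <= 1 -> 0 <= path_weight p s.
Proof.
move=> /andP[p0 p1]; apply: prodr_ge0 => i _; case: (s i) => //.
by rewrite subr_ge0.
Qed.

Lemma total_weight (p : R) n :
  \sum_(s : {ffun 'I_n -> bool}) path_weight p s = 1.
Proof.
rewrite /path_weight (sum_prod_ffun (fun i b => if b then p else 1 - p)).
by apply: big1 => i _; rewrite addrC subrK.
Qed.

Lemma chernoff_walk (p t lam : R) (K n j : nat) :
  0 <= p <= 1 -> 1 <= lam -> 0 < t -> (t ^+ 2) ^+ K.+1 <= lam ^+ K ->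
  (j <= n)%N ->
  \sum_(s : {ffun 'I_n -> bool} | K.+1%:Z * walk_pos s j <= j%:Z)
     path_weight p s <= ((p + (1 - p) * lam) / t) ^+ j.
Proof.
move=> p01 lam1 t0 Hk jn.
have lam0 : 0 < lam by apply: lt_le_trans lam1.
apply: (@le_trans _ _ (\sum_(s : {ffun 'I_n -> bool})
   path_weight p s * (lam ^+ nd s j / t ^+ j))).
  rewrite big_mkcond; apply: ler_sum => s _; case: ifP => bad; last first.
    by apply: mulr_ge0; [exact: path_weight_ge0|
       apply: divr_ge0; [apply: exprn_ge0; exact: ltW|apply: exprn_ge0; exact: ltW]].
  apply: ler_peMr; first exact: path_weight_ge0.
  rewrite ler_pdivlMr ?exprn_gt0 // mul1r.
  have key : (K * j <= 2 * K.+1 * nd s j)%N.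
    move: bad; rewrite walk_posE //; lia.
  have E1 : (t ^+ j) ^+ (2 * K.+1) = ((t ^+ 2) ^+ K.+1) ^+ j.
    by rewrite -!exprM; congr (_ ^+ _); rewrite mulnC mulnA.
  have E2 : (lam ^+ nd s j) ^+ (2 * K.+1) = lam ^+ (2 * K.+1 * nd s j).
    by rewrite -exprM mulnC.
  rewrite -(@ler_pXn2r _ (2 * K.+1)) //; last 2 first.
  - by rewrite nnegrE; apply: exprn_ge0; exact: ltW.
  - by rewrite nnegrE; apply: exprn_ge0; exact: ltW.
  rewrite E1 E2; apply: (@le_trans _ _ ((lam ^+ K) ^+ j)).
    by apply: lerXn2r => //; rewrite nnegrE; do ? apply: exprn_ge0; exact: ltW.
  by rewrite -exprM; apply: ler_weXn2l.
under eq_bigr do rewrite mulrA. rewrite -mulr_suml.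
have -> : \sum_(s : {ffun 'I_n -> bool}) path_weight p s * lam ^+ nd s j =
  \sum_(s : {ffun 'I_n -> bool}) \prod_(i < n)
     ((if s i then p else 1 - p) * (if (i < j)%N then lam ^+ (~~ s i : nat) else 1)).
  apply: eq_bigr => s _; rewrite big_split /=; congr (_ * _).
  by rewrite /nd -prodrXr big_mkcond.
rewrite (sum_prod_ffun (fun i b => (if b then p else 1 - p) *
           (if (i < j)%N then lam ^+ (~~ b : nat) else 1))).
have -> : \prod_(i < n) ((if true then p else 1 - p) *
      (if (i < j)%N then lam ^+ (~~ true : nat) else 1) +
      (if false then p else 1 - p) *
      (if (i < j)%N then lam ^+ (~~ false : nat) else 1)) =
   \prod_(i < n | (i < j)%N) (p + (1 - p) * lam).
  rewrite [RHS]big_mkcond; apply: eq_bigr => i _ /=; case: ifP => _.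
    by rewrite expr0 expr1 mulr1.
  by rewrite !mulr1 addrC subrK.
rewrite -(big_ord_widen n (fun=> p + (1 - p) * lam) jn) prodr_const card_ord.
by rewrite expr_div_n.
Qed.

End Walk.
Section Aux.
Variable R : realType.

Lemma geom_bound (r : R) (a N : nat) : 0 <= r < 1 ->
  \sum_(j < N | (a <= j)%N) r ^+ j <= r ^+ a / (1 - r).
Proof.
move=> /andP[r0 r1].
have inv : (1 - r) * \sum_(j < N | (a <= j)%N) r ^+ j + r ^+ (maxn a N) = r ^+ a.
  elim: N => [|N IH]; first by rewrite big_ord0 mulr0 add0r maxn0.
  rewrite big_mkcond big_ord_recr /= -big_mkcond /=.
  case: (leqP a N) => aN.
    have -> : maxn a N.+1 = N.+1 by apply/maxn_idPr; lia.
    have E : maxn a N = N by apply/maxn_idPr.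
    rewrite E in IH; rewrite -IH exprS; ring.
  have -> : maxn a N.+1 = a by apply/maxn_idPl; lia.
  have E : maxn a N = a by apply/maxn_idPl; lia.
  by rewrite E in IH; rewrite addr0.
have r1' : 0 < 1 - r by rewrite subr_gt0.
rewrite ler_pdivlMr // mulrC -inv lerDl; exact: exprn_ge0.
Qed.

Lemma union_bound (p : R) n (Q : pred 'I_n)
    (E : 'I_n -> {ffun 'I_n -> bool} -> bool) :
  0 <= p <= 1 ->
  \sum_(s : {ffun 'I_n -> bool} | [exists j, Q j && E j s]) path_weight p s <=
  \sum_(j | Q j) \sum_(s : {ffun 'I_n -> bool} | E j s) path_weight p s.
Proof.
move=> p01.
under [X in _ <= X]eq_bigr do rewrite big_mkcond.
rewrite exchange_big /= big_mkcond; apply: ler_sum => s _.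
case: existsP => [[j /andP[Qj Ejs]]|_]; last first.
  by apply: sumr_ge0 => j _; case: ifP => // _; exact: path_weight_ge0.
rewrite (bigD1 j) //= Ejs lerDl; apply: sumr_ge0 => i _.
by case: ifP => // _; exact: path_weight_ge0.
Qed.

Lemma eventually_small (r : R) (eps : R) : 0 <= r < 1 -> 0 < eps ->
  exists N, forall n, (N <= n)%N -> r ^+ n < eps.
Proof.
move=> /andP[r0 r1] e0.
have rn : `|r| < 1 by rewrite ger0_norm.
have [N _ HN] := cvgr0_norm_lt _ (cvg_expr rn) _ e0.
exists N => n Nn; have := HN n Nn; rewrite /= ger0_norm //; exact: exprn_ge0.
Qed.

Lemma count_lt n J0 : (J0 <= n)%N ->
  \sum_(j < n) (if (j < J0)%N then 1 else 0 : R) = J0%:R.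
Proof.
move=> Jn; rewrite -big_mkcond /=.
rewrite -(big_ord_widen n (fun=> (1:R)) Jn) sumr_const card_ord //.
Qed.

End Aux.

Lemma trunc_log_eqE L e z : (1 < L)%N -> (L ^ e <= z < L ^ e.+1)%N ->
  trunc_log L z = e.
Proof.
move=> L1 /andP[lo hi]; apply/eqP; rewrite eqn_leq (trunc_log_max L1 lo) andbT.
rewrite leqNgt; apply/negP => lt.
have z0 : (0 < z)%N by apply: leq_trans lo; rewrite expn_gt0; lia.
have := trunc_logP L1 z0.
have : (L ^ e.+1 <= L ^ trunc_log L z)%N by rewrite leq_pexp2l //; lia.
lia.
Qed.

Section LDP.
Variable R : realType.

Lemma no_LDP (P : nat -> set R -> R) (F U : set R) (a b : R) :
  closed F -> open U -> (F `<=` U)%classic -> b < a ->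
  (forall N, exists n, (N <= n)%N /\ (a%:E <= rate_seq P F n)%E) ->
  (forall N, exists n, (N <= n)%N /\ (rate_seq P U n <= b%:E)%E) ->
  ~ satisfies_LDP P.
Proof.
move=> cF oU FU ba HF HU [J [_ [_ [Hlo Hup]]]].
have h1 : (a%:E <= limn_esup (rate_seq P F))%E.
  rewrite limn_esup_lim; apply: lime_ge; first exact: is_cvg_esups.
  apply: nearW => N; have [n [Nn Hn]] := HF N.
  by apply: (le_trans Hn); apply: ereal_sup_ubound; exists n.
have h2 : (limn_einf (rate_seq P U) <= b%:E)%E.
  rewrite limn_einf_lim; apply: lime_le; first exact: is_cvg_einfs.
  apply: nearW => N; have [n [Nn Hn]] := HU N.
  by apply: le_trans Hn; apply: ereal_inf_lbound; exists n.
have h3 : (- ereal_inf (J @` F) <= - ereal_inf (J @` U))%E.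
  rewrite leeN2; apply: le_ereal_inf; exact: image_subset.
have := le_trans h1 (le_trans (Hup F cF) (le_trans h3 (le_trans (Hlo U oU) h2))).
by rewrite lee_fin leNgt ba.
Qed.

Lemma rate_lb (x : R) (n k : nat) (c rho : R) : (0 < n)%N -> 0 < rho -> 0 < c ->
  n%:R = c * k%:R -> rho ^+ k <= x ->
  ((ln rho / c)%:E <= ((n%:R)^-1)%:E * elog x)%E.
Proof.
move=> n0 r0 c0 nck rx.
have x0 : 0 < x by apply: lt_le_trans rx; exact: exprn_gt0.
have k0 : k%:R != 0 :> R.
  apply/eqP => k0; move: nck; rewrite k0 mulr0 => /eqP; rewrite pnatr_eq0; lia.
rewrite /elog (negbTE (lt0r_neq0 x0)) -EFinM lee_fin.
have -> : ln rho / c = (n%:R)^-1 * ln (rho ^+ k).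
  rewrite lnXn // -mulr_natr nck; field; rewrite k0 /=; exact: lt0r_neq0.
apply: ler_wpM2l; first by rewrite invr_ge0.
by rewrite ler_ln // posrE ?exprn_gt0.
Qed.

Lemma rate_ub (x : R) (n k : nat) (c rho : R) : (0 < n)%N -> 0 < rho -> 0 < c ->
  n%:R = c * k%:R -> 0 <= x -> x <= rho ^+ k ->
  (((n%:R)^-1)%:E * elog x <= (ln rho / c)%:E)%E.
Proof.
move=> n0 r0 c0 nck x0 rx.
have k0 : k%:R != 0 :> R.
  apply/eqP => k0; move: nck; rewrite k0 mulr0 => /eqP; rewrite pnatr_eq0; lia.
rewrite /elog; case: eqP => [_|/eqP xn0].
  rewrite mulrNy gtr0_sg ?invr_gt0 ?ltr0n // mul1e; exact: leNye.
have xp : 0 < x by rewrite lt0r xn0.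
rewrite -EFinM lee_fin.
have -> : ln rho / c = (n%:R)^-1 * ln (rho ^+ k).
  rewrite lnXn // -mulr_natr nck; field; rewrite k0 /=; exact: lt0r_neq0.
apply: ler_wpM2l; first by rewrite invr_ge0.
by rewrite ler_ln // posrE ?exprn_gt0.
Qed.

End LDP.

Section Construct.
Variable R : realType.
Variables (p rho : R) (Kp : nat).
Hypothesis p01 : 0 <= p <= 1.
Hypothesis rho0 : 0 < rho.
Hypothesis rho1 : rho < 1.
Hypothesis Kp0 : (0 < Kp)%N.
Hypothesis chern : forall n j, (j <= n)%N ->
  \sum_(s : {ffun 'I_n -> bool} | Kp%:Z * walk_pos s j <= j%:Z) path_weight p s
    <= rho ^+ j.

Definition LL := (16 * Kp)%N.

Definition fK (z : int) : R :=
  if (0 < z) && ~~ odd (trunc_log LL `|z|%N) then 1 else 0.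

Definition bad n (J0 : nat) (s : {ffun 'I_n -> bool}) :=
  [exists j : 'I_n, (J0 <= j)%N && (Kp%:Z * walk_pos s j <= j%:Z)].

Lemma fK01 z : 0 <= fK z <= 1.
Proof. by rewrite /fK; case: ifP => _; rewrite lexx ?ler01. Qed.

Lemma prob_bad n J0 :
  \sum_(s : {ffun 'I_n -> bool} | bad J0 s) path_weight p s <= rho ^+ J0 / (1 - rho).
Proof.
apply: le_trans (union_bound (fun j : 'I_n => (J0 <= j)%N)
  (fun (j : 'I_n) s => Kp%:Z * walk_pos s j <= j%:Z) p01) _.
apply: le_trans (geom_bound _ n _) ; last by rewrite ltW // rho1.
apply: ler_sum => j _; apply: chern; exact: ltnW.
Qed.

Lemma LL1 : (1 < LL)%N.
Proof. rewrite /LL; lia. Qed.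

Lemma pos_good e (s : {ffun 'I_(LL ^ e.+1) -> bool}) :
  ~~ bad (4 * Kp * LL ^ e) s ->
  forall j : 'I_(LL ^ e.+1), (4 * Kp * LL ^ e <= j)%N ->
  fK (walk_pos s j) = if odd e then 0 else 1.
Proof.
move=> nb j Jj.
have hj : j%:Z < Kp%:Z * walk_pos s j.
  rewrite ltNge; apply/negP => hb; move/negP: nb; apply.
  by apply/existsP; exists j; rewrite Jj hb.
have zle := walk_pos_le s (ltnW (ltn_ord j)).
move: hj zle; case: (walk_pos s j) => [m|m] hj zle; last first.
  exfalso; move: hj; rewrite NegzE; nia.
have jlt := ltn_ord j.
have hm : (4 * LL ^ e < m)%N.
  have : ((Kp * (4 * LL ^ e)) < Kp * m)%N.
    move: hj; rewrite -PoszM ltz_nat => hj.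
    apply: leq_ltn_trans hj; rewrite mulnA (mulnC Kp); exact: Jj.
  by rewrite ltn_pmul2l.
have hm2 : (m < LL ^ e.+1)%N.
  by move: zle; rewrite lez_nat => zle; apply: leq_ltn_trans zle jlt.
have tl : trunc_log LL m = e.
  apply: trunc_log_eqE; first exact: LL1.
  rewrite hm2 andbT; apply: leq_trans (ltnW hm); lia.
rewrite /fK /= tl.
have -> : (0 < m%:Z) = true by rewrite ltz_nat; apply: leq_ltn_trans hm.
by case: (odd e).
Qed.

Lemma nE e : (LL ^ e.+1 = 4 * (4 * Kp * LL ^ e))%N.
Proof. by rewrite expnS /LL; lia. Qed.

Lemma ell_lower e (s : {ffun 'I_(LL ^ e.+1) -> bool}) : ~~ odd e ->
  ~~ bad (4 * Kp * LL ^ e) s -> 3 / 4 <= ell fK s.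
Proof.
move=> ev nb; rewrite /ell.
set J0 := (4 * Kp * LL ^ e)%N.
have J0n : (J0 <= LL ^ e.+1)%N by rewrite nE; lia.
have J00 : (0 < J0)%N by rewrite /J0 !muln_gt0 expn_gt0 Kp0 (ltnW LL1).
have : \sum_(j < LL ^ e.+1) (1 - (if (j < J0)%N then 1 else 0)) <=
       \sum_(j < LL ^ e.+1) fK (walk_pos s j).
  apply: ler_sum => j _; case: ltnP => hj.
    by rewrite subrr; case/andP: (fK01 (walk_pos s j)).
  by rewrite (pos_good nb hj) (negbTE ev) subr0.
rewrite sumrB count_lt // sumr_const card_ord => h.
have nR : (LL ^ e.+1)%:R = 4 * J0%:R :> R by rewrite nE natrM.
rewrite nR in h *.
have xp : 0 < J0%:R :> R by rewrite ltr0n.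
have -> : 3 / 4 = (4 * J0%:R)^-1 * (4 * J0%:R - J0%:R) :> R.
  by field; exact: lt0r_neq0.
by apply: ler_wpM2l => //; rewrite invr_ge0 mulr_ge0 // ltW.
Qed.


Lemma ell_upper e (s : {ffun 'I_(LL ^ e.+1) -> bool}) : odd e ->
  ~~ bad (4 * Kp * LL ^ e) s -> ell fK s <= 1 / 4.
Proof.
move=> od nb; rewrite /ell.
set J0 := (4 * Kp * LL ^ e)%N.
have J0n : (J0 <= LL ^ e.+1)%N by rewrite nE; lia.
have J00 : (0 < J0)%N by rewrite /J0 !muln_gt0 expn_gt0 Kp0 (ltnW LL1).
have h : \sum_(j < LL ^ e.+1) fK (walk_pos s j) <=
       \sum_(j < LL ^ e.+1) (if (j < J0)%N then 1 else 0).
  apply: ler_sum => j _; case: ltnP => hj.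
    by case/andP: (fK01 (walk_pos s j)).
  by rewrite (pos_good nb hj) od.
rewrite count_lt // in h.
have nR : (LL ^ e.+1)%:R = 4 * J0%:R :> R by rewrite nE natrM.
rewrite nR.
have xp : 0 < J0%:R :> R by rewrite ltr0n.
have -> : 1 / 4 = (4 * J0%:R)^-1 * J0%:R :> R.
  by field; exact: lt0r_neq0.
by apply: ler_wpM2l => //; rewrite invr_ge0 mulr_ge0 // ltW.
Qed.

Lemma probF e : ~~ odd e ->
  1 - rho ^+ (4 * Kp * LL ^ e) / (1 - rho) <=
  ell_law p fK (LL ^ e.+1) [set x | 3 / 4 <= x].
Proof.
move=> ev; rewrite /ell_law.
have tot := total_weight p (LL ^ e.+1).
rewrite (bigID (bad (4 * Kp * LL ^ e))) /= in tot.
have hb := prob_bad (LL ^ e.+1) (4 * Kp * LL ^ e).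
apply: (@le_trans _ _ (\sum_(s : {ffun 'I_(LL ^ e.+1) -> bool} |
          ~~ bad (4 * Kp * LL ^ e) s) path_weight p s)).
  lra.
rewrite [X in _ <= X]big_mkcond [X in X <= _]big_mkcond; apply: ler_sum => s _.
case: ifP => nb; last by case: ifP => _ //; exact: path_weight_ge0.
by rewrite asboolT //= (ell_lower ev nb).
Qed.

Lemma probU e : odd e ->
  ell_law p fK (LL ^ e.+1) [set x | 1 / 2 < x] <=
  rho ^+ (4 * Kp * LL ^ e) / (1 - rho).
Proof.
move=> od; rewrite /ell_law.
apply: le_trans (prob_bad (LL ^ e.+1) (4 * Kp * LL ^ e)).
rewrite [X in _ <= X]big_mkcond [X in X <= _]big_mkcond; apply: ler_sum => s _.
case: asboolP => /= hU; last by case: ifP => _ //; exact: path_weight_ge0.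
case: ifP => // /negbT nb; exfalso.
have := ell_upper od nb; lra.
Qed.

Lemma noLDP_fK : ~ satisfies_LDP (ell_law p fK).
Proof.
have r1 : 0 < 1 - rho by rewrite subr_gt0.
have [M HM] := @eventually_small R rho ((1 - rho) / 2)
   (ltac:(by rewrite (ltW rho0) rho1) : (0 <= rho < 1)) (ltac:(by apply: divr_gt0)).
have lnr : ln rho < 0 by apply: ln_lt0; rewrite rho0 rho1.
apply: (@no_LDP R _ [set x | 3 / 4 <= x] [set x | 1 / 2 < x]
          (ln rho / 16) (ln rho / 8)).
- exact: closed_ge.
- exact: open_gt.
- by move=> x /= hx; lra.
- lra.
- move=> N; set k := maxn N M.
  set X := (LL ^ (2 * k))%N.
  have hk : ((2 * k).+1 < LL ^ (2 * k).+1)%N by apply: ltn_expl; exact: LL1.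
  have hX : (2 * k < X)%N by apply: ltn_expl; exact: LL1.
  have kM : (M <= k)%N by rewrite /k leq_maxr.
  have kN : (N <= k)%N by rewrite /k leq_maxl.
  have XK : (X <= Kp * X)%N by rewrite leq_pmull.
  exists (LL ^ (2 * k).+1)%N; split; first lia.
  rewrite /rate_seq.
  apply: (@rate_lb R _ _ (Kp * X)); first (by rewrite expn_gt0 (ltnW LL1)).
  + exact: rho0.
  + by [].
  + by rewrite nE -/X (_ : (4 * (4 * Kp * X) = 16 * (Kp * X))%N) ?natrM //; nia.
  + have h1 := HM (4 * Kp * X)%N ltac:(lia).
    have h2 := HM (Kp * X)%N ltac:(lia).
    have := @probF (2 * k) ltac:(by rewrite oddM).
    rewrite -/X.
    have : rho ^+ (4 * Kp * X) / (1 - rho) < 1 / 2.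
      by rewrite ltr_pdivrMr //; lra.
    set y := rho ^+ (4 * Kp * X) / (1 - rho); set P := ell_law _ _ _ _.
    move=> ha hb. have h3 : rho ^+ (Kp * X) < 1/2. apply: lt_le_trans h2 _. have := rho0. lra.
 have h4 : 1/2 < P by lra. lra.
- move=> N; set k := maxn N M.
  set X := (LL ^ (2 * k).+1)%N.
  have hk : ((2 * k).+2 < LL ^ (2 * k).+2)%N by apply: ltn_expl; exact: LL1.
  have hX : ((2 * k).+1 < X)%N by apply: ltn_expl; exact: LL1.
  have kM : (M <= k)%N by rewrite /k leq_maxr.
  have kN : (N <= k)%N by rewrite /k leq_maxl.
  have XK : (X <= Kp * X)%N by rewrite leq_pmull.
  exists (LL ^ (2 * k).+2)%N; split; first lia.
  rewrite /rate_seq.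
  apply: (@rate_ub R _ _ (2 * Kp * X)); first (by rewrite expn_gt0 (ltnW LL1)).
  + exact: rho0.
  + by [].
  + by rewrite nE -/X (_ : (4 * (4 * Kp * X) = 8 * (2 * Kp * X))%N) ?natrM //; nia.
  + by apply: sumr_ge0 => s _; exact: path_weight_ge0.
  + have h1 := HM (2 * Kp * X)%N ltac:(lia).
    apply: le_trans (@probU (2 * k).+1 ltac:(by rewrite /= oddM)) _.
    rewrite -/X.
    have -> : (4 * Kp * X = (2 * Kp * X) + (2 * Kp * X))%N by lia.
    rewrite exprD -mulrA.
    have y0 : 0 <= rho ^+ (2 * Kp * X) by apply: exprn_ge0; exact: ltW.
    apply: ler_piMr => //.
    by rewrite ler_pdivrMr // mul1r; apply: ltW; apply: lt_le_trans h1 _; have := rho0; lra.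
Qed.

End Construct.

Section Final.
Variable R : realType.

Lemma constants (p : R) : 2^-1 < p < 1 ->
  exists rho : R, exists Kp : nat, 0 < rho /\ rho < 1 /\ (0 < Kp)%N /\
   forall n j, (j <= n)%N ->
    \sum_(s : {ffun 'I_n -> bool} | Kp%:Z * walk_pos s j <= j%:Z) path_weight p s
      <= rho ^+ j.
Proof.
move=> /andP[ph p1].
have q0 : 0 < 1 - p by rewrite subr_gt0.
have p0 : 0 < p by apply: lt_trans ph; rewrite invr_gt0.
have p2 : 1 < 2 * p by lra.
set lam := p / (1 - p).
have hlam : 4 * p ^+ 2 < lam.
  rewrite /lam ltr_pdivlMr //.
  have : 0 < (2 * p - 1) ^+ 2 * p by apply: mulr_gt0 => //; apply: exprn_gt0; lra.
  move=> h; rewrite -subr_gt0; apply: lt_le_trans h _; rewrite le_eqVlt; apply/orP; left; apply/eqP; ring.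
have lam1 : 1 <= lam by rewrite /lam ler_pdivlMr // mul1r; lra.
have sq0 : 0 <= p ^+ 2 by apply: exprn_ge0; exact: ltW.
set T := (4 * p ^+ 2 + lam) / 2.
have T0 : 0 < T by rewrite /T; lra.
have TL : T < lam by rewrite /T; lra.
have T4 : 4 * p ^+ 2 < T by rewrite /T; lra.
set t := Num.sqrt T.
have tT : t ^+ 2 = T by rewrite /t sqr_sqrtr // ltW.
have t0 : 0 <= t by rewrite /t sqrtr_ge0.
have t2p : 2 * p < t.
  rewrite -(@ltr_pXn2r _ 2) // ?nnegrE ?mulr_ge0 ?ltW // tT.
  have -> : (2 * p) ^+ 2 = 4 * p ^+ 2 by ring.
  exact: T4.
have tp : 0 < t by apply: lt_trans t2p; lra.
have lam0 : 0 < lam by lra.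
have [N HN] := @eventually_small R (T / lam) (lam^-1)
   (ltac:(by rewrite divr_ge0 ?ltW //= ltr_pdivrMr // mul1r) : (0 <= T / lam < 1))
   (ltac:(by rewrite invr_gt0)).
have Hk : (t ^+ 2) ^+ N.+1 <= lam ^+ N.
  have := HN N.+1 (leqnSn N); rewrite expr_div_n ltr_pdivrMr ?exprn_gt0 //.
  rewrite [lam ^+ _.+1]exprS mulKf ?lt0r_neq0 // tT => h; exact: ltW.
exists (2 * p / t), N.+1; split; first by apply: divr_gt0 => //; lra.
split; first by rewrite ltr_pdivrMr // mul1r.
split => // n j jn.
have := @chernoff_walk R p t lam N n j (ltac:(by rewrite ltW // ltW)) lam1 tp Hk jn.
by have -> : p + (1 - p) * lam = 2 * p by rewrite /lam; field; exact: lt0r_neq0.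
Qed.

Definition flip n (s : {ffun 'I_n -> bool}) : {ffun 'I_n -> bool} := [ffun i => ~~ s i].

Lemma flip_inj n : injective (@flip n).
Proof.
move=> s1 s2 h; apply/ffunP => i.
by have := congr1 (fun s : {ffun _ -> bool} => s i) h; rewrite /flip !ffunE => /negb_inj.
Qed.

Lemma walk_flip n (s : {ffun 'I_n -> bool}) j : walk_pos (flip s) j = - walk_pos s j.
Proof.
rewrite /walk_pos -sumrN; apply: eq_bigr => i _; rewrite /flip ffunE.
by case: (s i).
Qed.

Lemma weight_flip (p : R) n (s : {ffun 'I_n -> bool}) :
  path_weight p (flip s) = path_weight (1 - p) s.
Proof.
rewrite /path_weight; apply: eq_bigr => i _; rewrite /flip ffunE.
by case: (s i) => //=; rewrite opprB addrC subrK.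
Qed.

Lemma ell_law_flip (p : R) (f : int -> R) n A :
  ell_law p (fun z => f (- z)) n A = ell_law (1 - p) f n A.
Proof.
rewrite /ell_law (reindex_inj (@flip_inj n)) /=.
apply: eq_big => s.
  suff -> : ell (fun z => f (- z)) (flip s) = ell f s by [].
  rewrite /ell; congr (_ * _); apply: eq_bigr => j _.
  by rewrite walk_flip opprK.
by move=> _; exact: weight_flip.
Qed.

End Final.

Theorem proposition1p3 (R : realType) (p : R) :
  0 < p < 1 -> p != 2^-1 ->
  exists f : int -> R,
    (exists M : R, forall z, `|f z| <= M) /\
    ~ satisfies_LDP (ell_law p f).
Proof.
move=> /andP[p0 p1] ph.
have bnd : forall Kp z, `|fK R Kp z| <= 1.
  move=> Kp z; have /andP[h0 h1] := fK01 R Kp z; by rewrite ger0_norm.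
case/orP: (lt_total ph) => hp.
- have q : 2^-1 < 1 - p < 1 by apply/andP; split; lra.
  have [rho [Kp [r0 [r1 [K0 ch]]]]] := constants q.
  exists (fun z => fK R Kp (- z)); split; first by exists 1 => z; exact: bnd.
  have -> : ell_law p (fun z => fK R Kp (- z)) = ell_law (1 - p) (fK R Kp).
    by apply/funext => n; apply/funext => A; exact: ell_law_flip.
  apply: (noLDP_fK _ r0 r1 K0 ch).
  by apply/andP; split; lra.
- have q : 2^-1 < p < 1 by apply/andP; split.
  have [rho [Kp [r0 [r1 [K0 ch]]]]] := constants q.
  exists (fK R Kp); split; first by exists 1 => z; exact: bnd.
  apply: (noLDP_fK _ r0 r1 K0 ch).
  by apply/andP; split; lra.
Qed.
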